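(* Let $(X,d)$ be a separable metric space, $T\colon X\to X$ a Borel measurable map and $\mu$ a $T$-invariant Borel probability measure such that $(X,T,\mu)$ is weakly mixing. Let $(s_n)_{n\ge1}$ be a two-jumpy scale sequence. Then the proximality gauge $\psi(x,y)=\liminf_{n\to\infty} s_n\, d(T^nx,T^ny)$ satisfies either $\psi=0$ for $\mu\times\mu$-a.e. $(x,y)$, or $\psi=\infty$ for $\mu\times\mu$-a.e. $(x,y)$.
   Context: A scale sequence is a sequence $(s_n)_{n\ge1}$ of positive reals with $s_n\to\infty$; it is two-jumpy if $s_{n+1}\ge s_n$ for all large $n$ and $\liminf_n s_{2n}/s_n>1$. Weakly mixing means $T\times T$ is ergodic with respect to $\mu\times\mu$. *)

(* Defs.v *)
From HB Require Import structures.
From mathcomp Require Import all_boot all_order all_algebra.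
From mathcomp Require Import all_classical all_reals all_analysis.
Set Implicit Arguments. Unset Strict Implicit. Unset Printing Implicit Defensive.
Import Order.TTheory GRing.Theory Num.Theory.
Local Open Scope classical_set_scope.
Local Open Scope ring_scope.

Definition is_metric (R : realType) (X : Type) (dist : X -> X -> R) : Prop :=
  [/\ forall x y, 0 <= dist x y,
      forall x y, dist x y = 0 <-> x = y,
      forall x y, dist x y = dist y x &
      forall x y z, dist x z <= dist x y + dist y z].

Definition metric_open (R : realType) (X : Type) (dist : X -> X -> R)
  (A : set X) : Prop :=
  forall x, A x -> exists2 e : R, 0 < e & [set y | dist x y < e] `<=` A.

Definition metric_separable (R : realType) (X : Type) (dist : X -> X -> R) : Prop :=
  exists D : set X, countable D /\
    forall x (e : R), 0 < e -> exists2 y, D y & dist x y < e.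

Definition borel_for (R : realType) d (X : measurableType d)
  (dist : X -> X -> R) : Prop :=
  (@measurable d X) = <<s metric_open dist >>.

Definition measure_preserving (R : realType) d (Y : measurableType d)
  (m : set Y -> \bar R) (S : Y -> Y) : Prop :=
  measurable_fun setT S /\
  forall A, measurable A -> m (S @^-1` A) = m A.

Definition ergodic (R : realType) d (Y : measurableType d)
  (m : set Y -> \bar R) (S : Y -> Y) : Prop :=
  measure_preserving m S /\
  forall A, measurable A -> S @^-1` A = A -> (m A = 0%E \/ m A = 1%E).

Definition weakly_mixing (R : realType) d (X : measurableType d)
  (mu : set X -> \bar R) (T : X -> X) : Prop :=
  ergodic (mu \x mu)%E (fun z : X * X => (T z.1, T z.2)).

Definition scale_sequence (R : realType) (s : nat -> R) : Prop :=
  (forall n, (0 < n)%N -> 0 < s n) /\ (s n @[n --> \oo] --> +oo).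

Definition two_jumpy (R : realType) (s : nat -> R) : Prop :=
  (exists N, forall n, (N <= n)%N -> s n <= s n.+1) /\
  (1 < limn_einf (fun n => (s (2 * n)%N / s n)%:E))%E.

Definition prox_gauge (R : realType) (X : Type) (dist : X -> X -> R)
  (T : X -> X) (s : nat -> R) (x y : X) : \bar R :=
  limn_einf (fun n => (s n * dist (iter n T x) (iter n T y))%:E).

(* Main.v *)
Require Import Defs.
From HB Require Import structures.
From mathcomp Require Import all_boot all_order all_algebra.
From mathcomp Require Import all_classical all_reals all_analysis.
Import measurable_realfun.
From mathcomp Require Import lra zify.
Import Order.TTheory GRing.Theory Num.Theory.
Local Open Scope classical_set_scope.
Local Open Scope ring_scope.

Section Liminf.
Context {R : realType}.
Local Open Scope ereal_scope.
Implicit Types (u : (\bar R)^nat).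

Lemma limn_einfE u : limn_einf u = ereal_sup (range (einfs u)).
Proof. by rewrite limn_einf_lim; apply/cvg_lim => //; exact: cvg_einfs_sup. Qed.

Lemma einfs_le u {n k} : (n <= k)%N -> einfs u n <= u k.
Proof. by move=> nk; apply: ereal_inf_lbound; exists k. Qed.

Lemma lt_limn_einf u l : l < limn_einf u -> exists N, forall n, (N <= n)%N -> l < u n.
Proof.
rewrite limn_einfE => /ereal_sup_gt[_ [N _ <-]] lN.
by exists N => n Nn; exact: (lt_le_trans lN (einfs_le u Nn)).
Qed.

Lemma limn_einf_lt u r : limn_einf u < r -> forall N, exists2 n, (N <= n)%N & u n < r.
Proof.
move=> ur N; apply: contrapT => H.
have : r <= einfs u N.
  apply: le_ereal_inf_tmp => _ [k /= Nk <-].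
  by rewrite leNgt; apply/negP => ukr; apply: H; exists k.
move=> rN; have : einfs u N <= limn_einf u.
  by rewrite limn_einfE; apply: ereal_sup_ubound; exists N.
by move=> /(le_trans rN); rewrite leNgt ur.
Qed.

Lemma limn_einf_le u r : (forall N, exists2 n, (N <= n)%N & u n < r) -> limn_einf u <= r.
Proof.
move=> H; rewrite limn_einfE; apply: ge_ereal_sup => _ [N _ <-].
have [n Nn unr] := H N; exact: (le_trans (einfs_le _ Nn) (ltW unr)).
Qed.

Lemma limn_einf_ge u r N : (forall n, (N <= n)%N -> r <= u n) -> r <= limn_einf u.
Proof.
move=> H; rewrite limn_einfE; apply: (le_trans _ (ereal_sup_ubound _)); last by exists N.
by apply: le_ereal_inf_tmp => _ [k /= Nk <-]; exact: H.
Qed.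
End Liminf.

Lemma covering {Y : Type} (S : Y -> Y) (b g : Y -> bool) (M : nat) :
  (forall y, g y -> exists2 t, (0 < t <= M)%N &
      (t <= 4 * \sum_(0 <= k < t) b (iter k S y))%N) ->
  forall K y, (K <= 4 * \sum_(0 <= k < K) (b (iter k S y) + ~~ g (iter k S y)) + 4 * M)%N.
Proof.
move=> Hg K; elim/ltn_ind: K => K IH y.
case gy: (g y); last first.
  case: K IH => [|K] IH; first by [].
  rewrite big_nat_recl // /= gy /=.
  have := IH K (ltnSn K) (S y).
  under [X in (_ <= 4 * X + _)%N -> _]eq_bigr do rewrite -iterSr iterS.
  by lia.
have [t /andP[t0 tM] tb] := Hg y gy.
case: (ltnP K t) => Kt; first by lia.
rewrite (big_cat_nat (leq0n t) Kt) /=.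
have E : (\sum_(t <= k < K) (b (iter k S y) + ~~ g (iter k S y)) =
    \sum_(0 <= k < K - t) (b (iter k S (iter t S y)) + ~~ g (iter k S (iter t S y))))%N.
  by rewrite -{1}(add0n t) big_addn; apply: eq_bigr => k _; rewrite iterD.
rewrite E.
have := IH (K - t)%N ltac:(lia) (iter t S y).
have : (\sum_(0 <= k < t) b (iter k S y) <= \sum_(0 <= k < t) (b (iter k S y) + ~~ g (iter k S y)))%N.
  by apply: leq_sum => k _; rewrite leq_addr.
by lia.
Qed.

Section Integ.
Context {R : realType} {dY : measure_display} {Y : measurableType dY}.

Lemma iter_preimage_meas (S : Y -> Y) (mS : measurable_fun setT S) k (A : set Y) :
  measurable A -> measurable (iter k S @^-1` A).
Proof.
elim: k A => [|k IH] A mA /=; first by [].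
rewrite (_ : _ @^-1` _ = iter k S @^-1` (S @^-1` A)); last first.
  by apply/seteqP; split => z.
apply: IH; rewrite -[S @^-1` A]setTI; exact: mS.
Qed.

Lemma iter_preimage_P (P : {measure set Y -> \bar R}) (S : Y -> Y) :
  measure_preserving P S ->
  forall k (A : set Y), measurable A -> P (iter k S @^-1` A) = P A.
Proof.
move=> [mS PS]; elim => [|k IH] A mA /=; first by [].
rewrite (_ : _ @^-1` _ = iter k S @^-1` (S @^-1` A)); last first.
  by apply/seteqP; split => z.
rewrite IH ?PS //; rewrite -[S @^-1` A]setTI; exact: mS.
Qed.

Lemma integrate_count (P : {measure set Y -> \bar R}) (S : Y -> Y)
  (PS : measure_preserving P S) (A C : set Y) (mA : measurable A) (mC : measurable C)
  (K M : nat) : P setT = 1%E ->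
  (forall y, (K <= 4 * \sum_(0 <= k < K) ((iter k S y \in A) + (iter k S y \in C)) + 4 * M)%N) ->
  K%:R <= 4 * (K%:R * (fine (P A) + fine (P C))) + 4 * M%:R.
Proof.
move=> PT Hy.
have mS := PS.1.
have mAk k : measurable (iter k S @^-1` A) by exact: iter_preimage_meas.
have mCk k : measurable (iter k S @^-1` C) by exact: iter_preimage_meas.
pose f k y : \bar R := ((\1_(iter k S @^-1` A) y)%:E + (\1_(iter k S @^-1` C) y)%:E)%E.
have f0 k y : (0 <= f k y)%E by rewrite /f adde_ge0 // lee_fin.
have mf k : measurable_fun setT (f k).
  apply: emeasurable_funD; apply/measurable_EFinP; exact: measurable_indic.
pose h y := (4%:E * (\sum_(0 <= k < K) f k y) + (4 * M%:R)%:E)%E.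
have mh : measurable_fun setT h.
  apply: emeasurable_funD; last exact: measurable_cst.
  apply: emeasurable_funM; first exact: measurable_cst.
  exact: emeasurable_sum.
have le : (\int[P]_(y in setT) (cst (K%:R)%:E) y <= \int[P]_(y in setT) h y)%E.
  apply: ge0_le_integral => //.
  - by move=> y _; rewrite lee_fin.
  - move=> y _; rewrite /h /f.
    rewrite [X in (_ <= _ * X + _)%E](_ : _ = (\sum_(0 <= k < K)
       ((iter k S y \in A) + (iter k S y \in C))%N%:R)%:E); last first.
      rewrite -sumEFin; apply: eq_bigr => k _.
      by rewrite !indicE natrD EFinD.
    rewrite -natr_sum -!EFinM -EFinD lee_fin -!natrM -natrD ler_nat; exact: Hy.
rewrite integral_cst // PT mule1 in le.
rewrite /h ge0_integralD // in le; last 2 first.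
  - by move=> y _; rewrite mule_ge0 // sume_ge0.
  - apply: emeasurable_funM; first exact: measurable_cst.
    exact: emeasurable_sum.
rewrite ge0_integralZl // in le; try exact: emeasurable_sum.
  all: try (by move=> y _; rewrite sume_ge0).
rewrite ge0_integral_sum // in le.
rewrite integral_cst // PT mule1 in le.
have PAf : P A = (fine (P A))%:E.
  have PAle : (P A <= 1)%E by rewrite -PT; apply: le_measure; rewrite ?inE //.
  by rewrite fineK // ge0_fin_numE // (le_lt_trans PAle) // ltry.
have PCf : P C = (fine (P C))%:E.
  have PCle : (P C <= 1)%E by rewrite -PT; apply: le_measure; rewrite ?inE //.
  by rewrite fineK // ge0_fin_numE // (le_lt_trans PCle) // ltry.
rewrite [X in (_ <= _ * X + _)%E](_ : _ = ((fine (P A) + fine (P C)) *+ K)%:E) in le; last first.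
  rewrite -[in RHS](subn0 K) -sumr_const_nat -sumEFin; apply: eq_bigr => k _.
  rewrite /f ge0_integralD //; try (by move=> y _; rewrite lee_fin);
    try (by apply/measurable_EFinP; exact: measurable_indic).
  rewrite !integral_indic // !setIT !iter_preimage_P //.
  by rewrite PAf PCf EFinD.
rewrite -EFinM -EFinD lee_fin in le. by rewrite [K%:R * _]mulr_natl.
Qed.
Lemma zero_one (P : {measure set Y -> \bar R}) (S : Y -> Y) (H : set Y) :
  ergodic P S -> measurable H -> H `<=` S @^-1` H -> P H = 0%E \/ P H = 1%E.
Proof.
move=> [[mS PS] erg] mH HS.
pose F k := iter k S @^-1` H.
have mF k : measurable (F k) by exact: iter_preimage_meas.
have mU : measurable (\bigcup_k F k) by exact: bigcupT_measurable.
have ndF : nondecreasing_seq F.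
  apply/nondecreasing_seqP => k; apply/subsetPset => z; rewrite /F /= => /HS.
  by [].
have cF := nondecreasing_cvg_mu (mu:=P) mF mU ndF.
have eF : P \o F = cst (P H).
  by apply/funext => k /=; rewrite iter_preimage_P.
rewrite eF in cF.
have PU := cvg_lim _ cF; rewrite lim_cst in PU.
have SU : S @^-1` (\bigcup_k F k) = \bigcup_k F k.
  apply/seteqP; split => z /=.
    by move=> [k _ Fk]; exists k.+1 => //; rewrite /F /= -iterS iterSr.
  move=> [k _]; rewrite /F /= => Hk; exists k => //.
  move: Hk; case: k => [|k] /=; first by move/HS.
  by rewrite -iterSr => /HS; rewrite /= -iterS.
rewrite PU; first exact: (erg _ mU SU). all: try exact: ereal_hausdorff.
Qed.
End Integ.

Section Dist.
Context {R : realType} {dX : measure_display} {X : measurableType dX}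
  (dist : X -> X -> R).

Lemma ball_measurable (hm : is_metric dist) (hB : borel_for dist) q (a : R) :
  measurable [set y | dist q y < a].
Proof.
rewrite /borel_for in hB; rewrite hB; apply: sub_sigma_algebra.
move=> y /= qy; exists (a - dist q y); first by rewrite subr_gt0.
case: hm => _ _ _ htri.
move=> w /= yw; have := htri q y w; lra.
Qed.

Lemma dist_lt_measurable (hm : is_metric dist) (hs : metric_separable dist)
  (hB : borel_for dist) (r : R) :
  measurable [set z : X * X | dist z.1 z.2 < r].
Proof.
have [D [cD dD]] := hs.
have [dpos dsep dsym dtri] := hm.
pose F q i := [set x | dist q x < (i.+1%:R)^-1] `*` [set y | dist q y < r - (i.+1%:R)^-1].
have mF q i : measurable (F q i).
  by apply: measurableX; exact: ball_measurable.
have E : [set z : X * X | dist z.1 z.2 < r] = \bigcup_(q in D) \bigcup_i F q i.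
  apply/seteqP; split => [[x y] /= xy|[x y] [q Dq [i _ [/= h1 h2]]]]; last first.
    have := dtri x q y; rewrite dsym in h1; move: h1 h2; set e := (i.+1%:R)^-1; lra.
  pose de := r - dist x y; have de0 : 0 < de by rewrite subr_gt0.
  pose i := Num.Def.trunc (2 / de).
  have hi := truncnS_gt (2 / de); rewrite -/i in hi.
  have n0 : 0 < i.+1%:R :> R by rewrite ltr0n.
  have ne : i.+1%:R * (i.+1%:R)^-1 = 1 :> R by rewrite mulfV // gt_eqF.
  have e0 : 0 < (i.+1%:R)^-1 :> R by rewrite invr_gt0.
  have hd : 2 < i.+1%:R * de.
    by rewrite -ltr_pdivrMr // .
  have [q Dq xq] := dD x _ e0.
  exists q => //; exists i => //; split => /=; first by rewrite dsym.
  have := dtri q x y; rewrite dsym in xq; rewrite /de in hd.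
  set n := i.+1%:R in n0 ne e0 hd xq *; set e := n^-1 in ne e0 xq *.
  nra.
rewrite E.
have /countable_injP[f finj] := cD.
pose G n := \bigcup_(q in [set q | D q /\ f q = n]) \bigcup_i F q i.
have -> : \bigcup_(q in D) \bigcup_i F q i = \bigcup_n G n.
  apply/seteqP; split => z.
    by move=> [q Dq h]; exists (f q) => //; exists q.
  by move=> [n _ [q [Dq _] h]]; exists q.
apply: bigcupT_measurable => n; rewrite /G.
have [[q0 [Dq0 fq0]]|nq] := pselect (exists q, D q /\ f q = n).
  have -> : [set q | D q /\ f q = n] = [set q0].
    apply/seteqP; split => q /=; last by move=> ->.
    move=> [Dq fq]; apply: finj; rewrite ?inE //; by rewrite fq fq0.
  rewrite bigcup_set1; exact: bigcupT_measurable.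
have -> : [set q | D q /\ f q = n] = set0.
  by apply/seteqP; split => q //= hq; apply: nq; exists q.
by rewrite bigcup_set0.
Qed.
End Dist.

Section Main.
Context (R : realType) (dX : measure_display) (X : measurableType dX)
  (dist : X -> X -> R) (T : X -> X) (mu : probability X R) (s : nat -> R).
Hypothesis hm : is_metric dist.
Hypothesis hs : metric_separable dist.
Hypothesis hB : borel_for dist.
Hypothesis wm : weakly_mixing mu T.
Hypothesis spos : forall n, (0 < n)%N -> 0 < s n.
Variable N0 : nat.
Hypothesis hmono : forall n, (N0 <= n)%N -> s n <= s n.+1.

Local Notation P := (mu \x mu)%E.
Definition Sm (z : X * X) := (T z.1, T z.2).
Definition dn n (z : X * X) := dist (iter n T z.1) (iter n T z.2).
Definition Bs N r := \bigcup_(n in [set n | (N < n)%N]) [set z | s n * dn n z < r].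
Definition Hs r := \bigcap_N Bs N r.

Lemma iter_Sm k z : iter k Sm z = (iter k T z.1, iter k T z.2).
Proof. elim: k => [|k IH]; first by case: z. by rewrite /= IH. Qed.

Lemma dn_iter m k z : dn m (iter k Sm z) = dn (m + k) z.
Proof. by rewrite /dn iter_Sm /= !iterD. Qed.

Lemma dn_ge0 n z : 0 <= dn n z.
Proof. by case: hm => h _ _ _; exact: h. Qed.

Lemma mSm : measurable_fun setT Sm.
Proof. exact: wm.1.1. Qed.

Lemma PSm : measure_preserving P Sm.
Proof. exact: wm.1. Qed.

Lemma PT : P setT = 1%E.
Proof.
rewrite -setXTT product_measure1E //. have h := @probability_setT _ _ _ mu.
transitivity (1 * 1 : \bar R)%E; last by rewrite mule1.
by congr (_ * _)%E; exact: h.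
Qed.

Lemma meas_lt n r : (0 < n)%N -> measurable [set z | s n * dn n z < r].
Proof.
move=> n0.
have -> : [set z | s n * dn n z < r] =
    iter n Sm @^-1` [set z | dist z.1 z.2 < r / s n].
  apply/seteqP; split => z /=; rewrite iter_Sm /= ltr_pdivlMr ?spos // mulrC /dn //.
apply: iter_preimage_meas; first exact: mSm.
exact: dist_lt_measurable.
Qed.

Lemma mBs N r : measurable (Bs N r).
Proof. by apply: bigcup_measurable => n /= Nn; apply: meas_lt; lia. Qed.

Lemma mHs r : measurable (Hs r).
Proof. by apply: bigcapT_measurable => N; exact: mBs. Qed.

Lemma Hs_sub r : Hs r `<=` Sm @^-1` Hs r.
Proof.
move=> z Hz N _; have [n /= Nn hn] := Hz (N + N0).+1 I.
exists n.-1; first by rewrite /=; lia.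
rewrite /= -[Sm z]/(iter 1 Sm z) dn_iter addn1 prednK; last by lia.
apply: le_lt_trans hn; apply: ler_wpM2r; first exact: dn_ge0.
rewrite -{2}(prednK (_ : (0 < n)%N)); last by lia.
apply: hmono; lia.
Qed.

Lemma Hs01 r : P (Hs r) = 0%E \/ P (Hs r) = 1%E.
Proof. exact: (@zero_one _ _ _ P Sm _ wm (mHs r) (Hs_sub r)). Qed.


Lemma Pfin {A} : measurable A -> P A = (fine (P A))%:E.
Proof.
move=> mA; have PA1 : (P A <= 1)%E.
  by rewrite -PT; apply: le_measure; rewrite ?inE //.
by rewrite fineK // ge0_fin_numE // (le_lt_trans PA1) // ltry.
Qed.

Lemma Plt {A} : measurable A -> (P A < +oo)%E.
Proof. by move=> mA; rewrite (Pfin mA) ltry. Qed.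

Lemma Pfine_ge0 A : 0 <= fine (P A).
Proof. by apply: fine_ge0. Qed.

Lemma Pfine_le1 A : measurable A -> fine (P A) <= 1.
Proof.
move=> mA; have PA1 : (P A <= 1)%E.
  by rewrite -PT; apply: le_measure; rewrite ?inE //.
by rewrite -lee_fin -Pfin.
Qed.

Lemma Pfine_le A B : measurable A -> measurable B -> A `<=` B -> fine (P A) <= fine (P B).
Proof.
move=> mA mB AB; rewrite -lee_fin -Pfin // -Pfin //.
by apply: le_measure; rewrite ?inE.
Qed.

Lemma PC A : measurable A -> fine (P (~` A)) = 1 - fine (P A).
Proof.
move=> mA; have e : (P A + P (~` A) = 1)%E.
  rewrite -PT -(setUv A); apply/esym/measureU => //; [exact: measurableC | exact: setICr].
move: e; rewrite (Pfin mA) (Pfin (measurableC mA)) -EFinD => /eqP.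
rewrite eqe => /eqP h; lra.
Qed.

Lemma ev_lt (u : nat -> \bar R) (a z : R) : u @ \oo --> a%:E -> a < z ->
  exists N, forall n, (N <= n)%N -> (u n < z%:E)%E.
Proof.
move=> /fine_cvgP[h1 h2] az.
have h3 := cvgr_lt _ h2 _ az.
have [N1 _ H1] := h1; have [N2 _ H2] := h3.
exists (maxn N1 N2) => n hn.
have n1 : (N1 <= n)%N by lia.
have n2 : (N2 <= n)%N by lia.
by rewrite -(fineK (H1 _ n1)) lte_fin; apply: H2.
Qed.

Lemma ev_gt (u : nat -> \bar R) (a z : R) : u @ \oo --> a%:E -> z < a ->
  exists N, forall n, (N <= n)%N -> (z%:E < u n)%E.
Proof.
move=> /fine_cvgP[h1 h2] az.
have h3 := cvgr_gt _ h2 _ az.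
have [N1 _ H1] := h1; have [N2 _ H2] := h3.
exists (maxn N1 N2) => n hn.
have n1 : (N1 <= n)%N by lia.
have n2 : (N2 <= n)%N by lia.
by rewrite -(fineK (H1 _ n1)) lte_fin; apply: H2.
Qed.

Lemma Bs_small r : P (Hs r) = 0%E -> exists N, fine (P (Bs N r)) < 1/8.
Proof.
move=> H0.
have ni : nonincreasing_seq (fun N => Bs N r).
  apply/nonincreasing_seqP => N; apply/subsetPset => z [n /= Nn h].
  by exists n => //=; lia.
have cv : (fun N => P (Bs N r)) @ \oo --> P (Hs r).
  rewrite /Hs; apply: (nonincreasing_cvg_mu (mu:=P) (F := fun N => Bs N r)) => //.
  - exact: (Plt (mBs 0 r)).
  - by move=> i; exact: mBs.
  - exact: (mHs r).
rewrite H0 in cv.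
have [N HN] := @ev_lt _ 0 (1/8) cv ltac:(lra).
exists N; have := HN N (leqnn N); rewrite /= (Pfin (mBs N r)) lte_fin //.
Qed.

Definition G N1 M r := \bigcup_(n in [set n | (N1 < n <= M)%N]) [set z | s n * dn n z < r].

Lemma mG N1 M r : measurable (G N1 M r).
Proof. by apply: bigcup_measurable => n /= /andP[Nn _]; apply: meas_lt; lia. Qed.

Lemma Gs_big r N1 : P (Hs r) = 1%E -> exists M, fine (P (~` G N1 M r)) < 1/8.
Proof.
move=> H1.
have nd : nondecreasing_seq (fun M => G N1 M r).
  apply/nondecreasing_seqP => M; apply/subsetPset => z [n /= Nn h].
  by exists n => //=; lia.
have EU : \bigcup_M G N1 M r = Bs N1 r.
  apply/seteqP; split => z.
    by move=> [M _ [n /= /andP[Nn _] h]]; exists n.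
  by move=> [n /= Nn h]; exists n => //; exists n => //=; rewrite Nn leqnn.
have cv : (fun M => P (G N1 M r)) @ \oo --> P (Bs N1 r).
  rewrite -EU; apply: (nondecreasing_cvg_mu (mu:=P) (F := fun M => G N1 M r)) => //.
  - by move=> i; exact: mG.
  - by rewrite EU; exact: mBs.
have PB : P (Bs N1 r) = 1%E.
  apply/eqP; rewrite eq_le; apply/andP; split.
    by rewrite -PT; apply: le_measure; rewrite ?inE //; exact: mBs.
  rewrite -H1; apply: le_measure; rewrite ?inE //; [exact: mHs | exact: mBs |].
  by move=> z Hz; exact: Hz.
rewrite PB in cv.
have [M HM] := @ev_gt _ 1 (7/8) cv ltac:(lra).
exists M; rewrite PC; last exact: mG.
have := HM M (leqnn M); rewrite /= (Pfin (mG N1 M r)) lte_fin; lra.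
Qed.

Variable lam : R.
Hypothesis hlam : 1 < lam.
Variable N2 : nat.
Hypothesis hjump : forall m, (N2 <= m)%N -> lam * s m <= s (2 * m).

Lemma s_mono m n : (N0 <= m)%N -> (m <= n)%N -> s m <= s n.
Proof.
move=> Nm /subnK <-; elim: (n - m)%N => [|k IH] //=.
rewrite addSn; apply: le_trans IH _; apply: hmono; lia.
Qed.

Lemma window_in y n N' k r : (N0 + N2 <= N')%N -> s n * dn n y < lam * r ->
  (n - n./2 <= k)%N -> (k < n - N')%N -> iter k Sm y \in Bs N' r.
Proof.
move=> hN' hit k1 k2; rewrite inE.
have hk : (n - k + k = n)%N by lia.
exists (n - k)%N; first by rewrite /=; lia.
rewrite /= dn_iter hk.
have h1 : lam * s (n - k) <= s (2 * (n - k)) by apply: hjump; lia.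
have h2 : s (2 * (n - k)) <= s n.
  apply: s_mono; first lia.
  have := odd_double_half n; rewrite -mul2n; lia.
have d0 := dn_ge0 n y.
have l0 : 0 < lam := lt_trans ltr01 hlam.
have : lam * (s (n - k) * dn n y) < lam * r.
  apply: le_lt_trans hit; rewrite mulrA; apply: ler_wpM2r => //; lra.
by rewrite ltr_pM2l.
Qed.

Lemma count_window y n N' r : (N0 + N2 <= N')%N -> (4 * N' + 3 <= n)%N ->
  s n * dn n y < lam * r ->
  (n.+1 <= 4 * \sum_(0 <= k < n.+1) (iter k Sm y \in Bs N' r))%N.
Proof.
move=> hN' hn hit.
have hh := odd_double_half n; rewrite -mul2n in hh.
have a1 : (0 <= n - n./2)%N by [].
have a2 : (n - n./2 <= n - N')%N by lia.
have a3 : (n - N' <= n.+1)%N by lia.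
rewrite (big_cat_nat a1 (leq_trans a2 a3)) /= (big_cat_nat a2 a3) /=.
have -> : (\sum_(n - n./2 <= k < n - N') (iter k Sm y \in Bs N' r) =
    \sum_(n - n./2 <= k < n - N') 1)%N.
  apply: eq_big_nat => k /andP[k1 k2].
  by rewrite (@window_in y n N' k r hN' hit k1 k2).
rewrite sum_nat_const_nat.
lia.
Qed.

Lemma step r : 0 < r -> P (Hs r) = 0%E -> P (Hs (lam * r)) = 0%E.
Proof.
move=> r0 H0; case: (Hs01 (lam * r)) => // H1; exfalso.
have [N hN] := Bs_small r H0.
pose N' := (N + N0 + N2)%N.
have hN' : fine (P (Bs N' r)) < 1/8.
  apply: le_lt_trans hN; apply: Pfine_le; try exact: mBs.
  by move=> z [n /= Nn h]; exists n => //=; rewrite /N' in Nn; lia.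
pose N1 := (4 * N' + 3)%N.
have [M hM] := Gs_big (lam * r) N1 H1.
have hgood : forall y, y \in G N1 M (lam * r) -> exists2 t, (0 < t <= M.+1)%N &
    (t <= 4 * \sum_(0 <= k < t) (iter k Sm y \in Bs N' r))%N.
  move=> y; rewrite inE => -[n /= /andP[n1 n2] hit].
  exists n.+1; first by lia.
  apply: count_window hit; rewrite /N' /N1 in n1 *; lia.
have cov := @covering _ Sm (fun y => y \in Bs N' r) (fun y => y \in G N1 M (lam * r)) M.+1 hgood.
pose a := fine (P (Bs N' r)); pose c := fine (P (~` G N1 M (lam * r))).
have a0 : 0 <= a by exact: Pfine_ge0.
have c0 : 0 <= c by exact: Pfine_ge0.
pose de := 1/4 - (a + c).
have de0 : 0 < de by rewrite /de /a /c; lra.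
pose K := (Num.Def.trunc ((M.+1)%:R / de)).+1.
have hK := truncnS_gt ((M.+1)%:R / de); rewrite -/K in hK.
rewrite ltr_pdivrMr // in hK.
have := @integrate_count _ _ _ P Sm PSm _ _ (mBs N' r) (measurableC (mG N1 M (lam * r))) K M.+1 PT.
move=> /(_ _) ineq.
have {}ineq : K%:R <= 4 * (K%:R * (a + c)) + 4 * M.+1%:R.
  apply: ineq => y; have := cov K y.
  move=> h; apply: leq_trans h _; rewrite leq_add2r leq_mul2l; apply/orP; right.
  by apply: leq_sum => k _; rewrite in_setC.
rewrite /de in hK; nra.
Qed.

Lemma step_pow r : 0 < r -> P (Hs r) = 0%E -> forall k, P (Hs (lam ^+ k * r)) = 0%E.
Proof.
move=> r0 H0; elim => [|k IH]; first by rewrite expr0 mul1r.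
rewrite exprS -mulrA; apply: step => //.
by rewrite mulr_gt0 // exprn_gt0 // (lt_trans ltr01 hlam).
Qed.

Lemma pow_ge k : 1 + k%:R * (lam - 1) <= lam ^+ k.
Proof.
elim: k => [|k IH]; first by rewrite expr0 mul0r addr0.
rewrite exprS.
have l1 : 1 <= lam by exact: ltW.
have e0 : 0 <= k%:R :> R by [].
have : lam * (1 + k%:R * (lam - 1)) <= lam * lam ^+ k.
  by rewrite ler_pM2l // (lt_trans ltr01 hlam).
have sq : 0 <= k%:R * ((lam - 1) * (lam - 1)) by rewrite mulr_ge0 // -expr2 sqr_ge0.
rewrite -[k.+1]addn1 natrD; nra.
Qed.

Lemma pow_unbounded rho r : 0 < r -> exists k, rho <= lam ^+ k * r.
Proof.
move=> r0; have l1 : 0 < lam - 1 by rewrite subr_gt0.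
pose k := (Num.Def.trunc (`|rho| / (r * (lam - 1)))).+1.
have hk := truncnS_gt (`|rho| / (r * (lam - 1))); rewrite -/k ltr_pdivrMr ?mulr_gt0 // in hk.
exists k; have := pow_ge k; have := ler_norm rho.
have : 0 <= k%:R :> R by [].
move=> k0 h1 h2.
have : (1 + k%:R * (lam - 1)) * r <= lam ^+ k * r by rewrite ler_pM2r.
nra.
Qed.

Lemma small0 (r : R) : 0 <= r -> (forall i, r <= (i.+1%:R)^-1) -> r = 0.
Proof.
move=> r0 h; apply/eqP; rewrite eq_le r0 andbT leNgt; apply/negP => rp.
pose i := Num.Def.trunc (r^-1).
have hi := truncnS_gt (r^-1); rewrite -/i in hi.
have ir := h i.
have e2 : r * r^-1 = 1 by rewrite mulfV // gt_eqF.
have n0 : 0 < i.+1%:R :> R by rewrite ltr0n.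
have e1 : i.+1%:R * (i.+1%:R)^-1 = 1 :> R by rewrite mulfV // gt_eqF.
move: hi ir e1 e2; set n := i.+1%:R; set v := r^-1; set w := n^-1.
move=> hi ir e1 e2.
have : r * n <= w * n by rewrite ler_pM2r.
have : r * v < r * n by rewrite ltr_pM2l.
nra.
Qed.

Lemma HsP {r z} : Hs r z -> forall N, exists2 n, (N <= n)%N & ((s n * dn n z)%:E < r%:E)%E.
Proof.
move=> Hz N; have [n /= Nn hn] := Hz N I.
by exists n; [exact: ltnW | rewrite lte_fin].
Qed.

Lemma psi_ge0 z : (0 <= limn_einf (fun n => (s n * dn n z)%:E))%E.
Proof.
apply: (@limn_einf_ge _ _ 0 1) => n n1; rewrite lee_fin mulr_ge0 //.
  by apply: ltW; apply: spos.
exact: dn_ge0.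
Qed.

Lemma negC A : measurable A -> P A = 1%E -> P.-negligible (~` A).
Proof.
move=> mA PA; exists (~` A); split => //; first exact: measurableC.
rewrite (Pfin (measurableC mA)) PC // (Pfin mA) PA /= subrr //.
Qed.

Lemma neg0 A : measurable A -> P A = 0%E -> P.-negligible A.
Proof. by move=> mA PA; exists A; split. Qed.

Lemma caseA : (forall i, P (Hs (i.+1%:R^-1)) = 1%E) ->
  {ae P, forall z : X * X, prox_gauge dist T s z.1 z.2 = 0%E}.
Proof.
move=> hA.
have nW : P.-negligible (\bigcup_i ~` Hs (i.+1%:R^-1)).
  by apply: negligible_bigcup => i; apply: negC; [exact: mHs | exact: hA].
apply: negligibleS nW => z /= hz; apply: contrapT => hW; apply: hz.
have hin : forall i, Hs (i.+1%:R^-1) z.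
  by move=> i; apply: contrapT => hn; apply: hW; exists i.
rewrite /prox_gauge.
have := psi_ge0 z; rewrite /dn.
set L := limn_einf _ => L0.
have Lle : forall i, (L <= (i.+1%:R^-1)%:E)%E.
  by move=> i; apply: limn_einf_le; exact: (HsP (hin i)).
case: L L0 Lle => [x| |] //= x0 Lle.
  by congr (_%:E); apply: small0 => // i; rewrite -lee_fin.
by have := Lle 0%N.
Qed.

Lemma caseB r : 0 < r -> P (Hs r) = 0%E ->
  {ae P, forall z : X * X, prox_gauge dist T s z.1 z.2 = +oo%E}.
Proof.
move=> r0 H0.
have nW : P.-negligible (\bigcup_k Hs (lam ^+ k * r)).
  by apply: negligible_bigcup => k; apply: neg0; [exact: mHs | exact: step_pow].
apply: negligibleS nW => z /= hz.
rewrite /prox_gauge in hz.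
have := psi_ge0 z; rewrite /dn in hz *.
set L := limn_einf _ in hz * => L0.
have [rho Lrho] : exists rho : R, (L < rho%:E)%E.
  case: L hz L0 => [x| |] //= _ _; first by exists (x + 1); rewrite lte_fin ltrDl.
have [k hk] := @pow_unbounded rho r r0.
exists k => //; move=> N _.
have [n Nn hn] := @limn_einf_lt _ _ _ Lrho N.+1.
exists n => //=.
by rewrite -lte_fin (lt_le_trans hn) // lee_fin.
Qed.

End Main.

Theorem corollary3p10 (R : realType) (d : measure_display) (X : measurableType d)
  (dist : X -> X -> R) (T : X -> X) (mu : probability X R) (s : nat -> R) :
  is_metric dist -> metric_separable dist -> borel_for dist ->
  measurable_fun setT T -> measure_preserving mu T ->
  weakly_mixing mu T ->
  scale_sequence s -> two_jumpy s ->
  {ae (mu \x mu)%E, forall z : X * X, prox_gauge dist T s z.1 z.2 = 0%E} \/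
  {ae (mu \x mu)%E, forall z : X * X, prox_gauge dist T s z.1 z.2 = +oo%E}.
Proof.
move=> hm hs hB _ _ wm [spos _] [[N0 hmono] hJ].
have [lam [hlam1 hlamL]] : exists lam : R, 1 < lam /\
    (lam%:E < limn_einf (fun n => (s (2 * n)%N / s n)%:E))%E.
  move: hJ; set L := limn_einf _; case: L => [x| |] //=.
  - rewrite lte_fin => x1; exists ((1 + x) / 2); split; first lra.
    rewrite lte_fin; lra.
  - by move=> _; exists 2; split; [lra | exact: ltry].
have [N2 hN2] := @lt_limn_einf _ _ _ hlamL.
have hjump : forall m, (N2.+1 <= m)%N -> lam * s m <= s (2 * m).
  move=> m hm'; have := hN2 m ltac:(lia).
  rewrite lte_fin ltr_pdivlMr; last by apply: spos; lia.
  exact: ltW.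
case: (pselect (forall i : nat,
    (mu \x mu)%E (Hs _ _ _ dist T s (i.+1%:R^-1)) = 1%E)) => [hA|hA].
  by left; exact: (caseA _ _ _ _ _ _ _ hm hs hB wm spos hA).
right.
have [i hi] : exists i : nat, (mu \x mu)%E (Hs _ _ _ dist T s (i.+1%:R^-1)) <> 1%E.
  by apply: contrapT => h; apply: hA => i; apply: contrapT => hi; apply: h; exists i.
have H0 : (mu \x mu)%E (Hs _ _ _ dist T s (i.+1%:R^-1)) = 0%E.
  by case: (Hs01 _ _ _ _ _ _ _ hm hs hB wm spos N0 hmono (i.+1%:R^-1)).
apply: (caseB _ _ _ _ _ _ _ hm hs hB wm spos N0 hmono lam hlam1 N2.+1 hjump _ _ H0).
by rewrite invr_gt0 ltr0n.
Qed.
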